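(* Let $K_n$ be the complete graph with $n\ge 4$ vertices and $m=n(n-1)/2$ edges, let $R=R_{K_n}$ be its $n\times m$ vertex-edge incidence matrix and $A_{\mathcal L(K_n)}$ the adjacency matrix of its line graph (edges ordered as the columns of $R$). Order the vertices of $\mathcal Q(K_n)$ with the $n$ vertices of $K_n$ first, followed by the $m$ new vertices (the new vertex on edge $e$ in the position of column $e$ of $R$). Let $0^+=n+1$, $0^-=0$, $n^{\pm}=\frac12\big(2n+1\pm\sqrt{4n+1}\big)$, and $F_n(K_n)=I_n-\frac1nJ_n$. Then: (a) $2n$ is a Laplacian eigenvalue of $\mathcal Q(K_n)$ with eigenprojector $$F_{2n}=\begin{pmatrix}\mathbf 0&\mathbf 0\\ \mathbf 0& I_m-\Big(\frac{1}{n-2}\big(A_{\mathcal L(K_n)}+2I_m\big)+\big(\frac{2}{n(n-1)}-\frac{4}{n(n-2)}\big)J_m\Big)\end{pmatrix};$$ (b) $0^{\pm}$ are Laplacian eigenvalues of $\mathcal Q(K_n)$ with eigenprojectors $$F_{0^\pm}=\frac{(2-0^\pm)^2}{(2-0^\pm)^2+2n-2}\begin{pmatrix}\frac1nJ_n&\frac{2}{n(2-0^\pm)}J_{n\times m}\\ \frac{2}{n(2-0^\pm)}J_{m\times n}&\frac{4}{n(2-0^\pm)^2}J_m\end{pmatrix};$$ (c) $n^{\pm}$ are Laplacian eigenvalues of $\mathcal Q(K_n)$ with eigenprojectors $$F_{n^\pm}=\frac{(n+2-n^\pm)^2}{(n+2-n^\pm)^2+n-2}\begin{pmatrix}F_n(K_n)&\frac{1}{n+2-n^\pm}F_n(K_n)R\\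 \frac{1}{n+2-n^\pm}(F_n(K_n)R)^\top&\frac{1}{(n+2-n^\pm)^2}R^\top F_n(K_n)R\end{pmatrix}.$$ Consequently $L_{\mathcal Q(K_n)}=0^+F_{0^+}+0^-F_{0^-}+n^+F_{n^+}+n^-F_{n^-}+2nF_{2n}$.
   Context: The Q-graph $\mathcal Q(G)$ is obtained from $G$ by inserting a new vertex into each edge of $G$ and joining by an edge each pair of new vertices lying on adjacent edges of $G$. $L_H=D_H-A_H$ denotes the Laplacian of a graph $H$; the eigenprojector of an eigenvalue is the orthogonal projection onto its eigenspace. $J$ denotes an all-ones matrix of the indicated size and $I$ an identity matrix. *)

(* Defs.v *)
From HB Require Import structures.
From mathcomp Require Import all_boot all_order all_algebra.
Set Implicit Arguments. Unset Strict Implicit. Unset Printing Implicit Defensive.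
Import Order.TTheory GRing.Theory Num.Theory.
Local Open Scope ring_scope.

(* Edges of the complete graph K_n : unordered pairs {i,j}, encoded as i < j. *)
Definition Kedge (n : nat) := {p : 'I_n * 'I_n | (p.1 < p.2)%N}.

Definition nedges (n : nat) : nat := #|{: Kedge n}|.

(* Fixed ordering of the edges: column e of R is the edge kedge e. *)
Definition kedge (n : nat) (e : 'I_(nedges n)) : Kedge n := enum_val e.

Definition incid (n : nat) (i : 'I_n) (e : 'I_(nedges n)) : bool :=
  (i == (val (kedge e)).1) || (i == (val (kedge e)).2).

Section Mats.
Variable R : nzRingType.

Definition incmx (n : nat) : 'M[R]_(n, nedges n) :=
  \matrix_(i, e) (incid i e)%:R.

Definition lineadj (n : nat) : 'M[R]_(nedges n) :=
  \matrix_(e, f) ((e != f) && [exists i : 'I_n, incid i e && incid i f])%:R.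

Definition laplacian (k : nat) (A : 'M[R]_k) : 'M[R]_k :=
  diag_mx (\row_i (\sum_j A i j)) - A.

(* Adjacency matrix of Q(K_n): the n original vertices first, then the m new
   vertices (new vertex of edge e in position e). Original vertices are pairwise
   non-adjacent in Q(G); original vertex i is adjacent to the new vertex on e iff
   i is an endpoint of e; two new vertices are adjacent iff their edges are
   adjacent in K_n. *)
Definition QKadj (n : nat) : 'M[R]_(n + nedges n) :=
  block_mx 0 (incmx n) (incmx n)^T (lineadj n).

Definition QKlap (n : nat) : 'M[R]_(n + nedges n) := laplacian (QKadj n).
End Mats.

(* F is the eigenprojector of the eigenvalue a of the (symmetric) matrix L:
   a is an eigenvalue, and F is the orthogonal projection onto the eigenspace,
   i.e. F is symmetric, idempotent and its range (= row space, F symmetric) is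
   the eigenspace of a. *)
Definition eigenprojector (F : fieldType) (k : nat) (L : 'M[F]_k) (a : F)
    (P : 'M[F]_k) : Prop :=
  [/\ eigenvalue L a, P^T = P, P *m P = P & (P == eigenspace L a)%MS].

(* Main.v *)
Require Import Defs.
From HB Require Import structures.
From mathcomp Require Import all_boot all_order all_algebra.
From mathcomp Require Import ring lra zify.
Set Implicit Arguments. Unset Strict Implicit. Unset Printing Implicit Defensive.
Import Order.TTheory GRing.Theory Num.Theory.

Lemma sum_edges n (g : 'I_n * 'I_n -> nat) :
  \sum_(e < nedges n) g (val (kedge e)) = \sum_(p : 'I_n * 'I_n | (p.1 < p.2)%N) g p.
Proof.
rewrite /kedge /nedges -(big_enum_val (fun x : Kedge n => g (val x))) /=.
rewrite (reindex_omap (val : Kedge n -> _) insub); last first.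
  by move=> p hp; rewrite insubT.
apply: eq_bigl => -[p hp] /=; by rewrite insubT /= eqxx andbT.
Qed.

Lemma sum_condM (T : finType) (P : pred T) (h : T -> nat) :
  \sum_(p | P p) h p = \sum_p P p * h p.
Proof. rewrite big_mkcond; apply: eq_bigr => p _; by case: (P p); rewrite ?mul1n ?mul0n. Qed.

Lemma sumI n (i : 'I_n) (g : 'I_n -> nat) : \sum_(a < n) (i == a) * g a = g i.
Proof.
rewrite (bigD1 i) //= eqxx mul1n big1 ?addn0 // => a hai.
by rewrite eq_sym (negbTE hai).
Qed.

Lemma sumI' n (i : 'I_n) (g : 'I_n -> nat) : \sum_(a < n) (a == i) * g a = g i.
Proof. rewrite -(sumI i g); apply: eq_bigr => a _; by rewrite eq_sym. Qed.

Lemma pairs n (h : 'I_n -> 'I_n -> nat) :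
  \sum_(p : 'I_n * 'I_n | (p.1 < p.2)%N) h p.1 p.2 = \sum_(a < n) \sum_(b < n) (a < b) * h a b.
Proof. by rewrite sum_condM pair_bigA. Qed.

Lemma dbl1 n (i : 'I_n) (f : 'I_n -> 'I_n -> nat) :
  \sum_(a < n) \sum_(b < n) (a < b) * ((i == a) * f a b) = \sum_(b < n) (i < b) * f i b.
Proof.
transitivity (\sum_(a < n) (i == a) * \sum_(b < n) (a < b) * f a b); last by rewrite sumI.
apply: eq_bigr => a _; rewrite big_distrr; apply: eq_bigr => b _ /=; by rewrite mulnCA.
Qed.

Lemma dbl2 n (i : 'I_n) (f : 'I_n -> 'I_n -> nat) :
  \sum_(a < n) \sum_(b < n) (a < b) * ((i == b) * f a b) = \sum_(a < n) (a < i) * f a i.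
Proof.
rewrite exchange_big /=.
transitivity (\sum_(b < n) (i == b) * \sum_(a < n) (a < b) * f a b); last by rewrite sumI.
apply: eq_bigr => b _; rewrite big_distrr; apply: eq_bigr => a _ /=; by rewrite mulnCA.
Qed.

Lemma count_lg n (i : 'I_n) : \sum_(b < n) (i < b) + \sum_(a < n) (a < i) = n.-1.
Proof.
rewrite -big_split /=.
transitivity (\sum_(b < n) (b != i : nat)).
  apply: eq_bigr => b _; rewrite -(inj_eq val_inj) /= neq_ltn.
  by case: (ltngtP i b).
rewrite (bigD1 i) //= eqxx add0n.
rewrite (eq_bigr (fun _ => 1%N)); last by move=> b ->.
by rewrite sum1_card cardC1 card_ord.
Qed.

Lemma incN n (i : 'I_n) (p : 'I_n * 'I_n) : (p.1 < p.2)%N ->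
  (((i == p.1) || (i == p.2)) : nat) = ((i == p.1) + (i == p.2))%N.
Proof.
move=> h; case: (i =P p.1) => [e1|]; case: (i =P p.2) => [e2|] //=.
by move: h; rewrite -e1 -e2 ltnn.
Qed.

Lemma incid_sum n (i : 'I_n) : \sum_e (incid i e : nat) = n.-1.
Proof.
rewrite /incid (sum_edges (fun p => ((i == p.1) || (i == p.2)) : nat)).
rewrite (eq_bigr (fun p => ((i == p.1) + (i == p.2))%N)); last by move=> p hp; rewrite incN.
rewrite (pairs (fun a b => ((i == a) + (i == b))%N)).
transitivity (\sum_(a < n) \sum_(b < n) (a < b) * ((i == a) * 1) + \sum_(a < n) \sum_(b < n) (a < b) * ((i == b) * 1))%N.
  rewrite -big_split; apply: eq_bigr => a _; rewrite -big_split; apply: eq_bigr => b _ /=.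
  by rewrite !muln1 mulnDr.
rewrite dbl1 dbl2 -(count_lg i); congr (_ + _)%N; apply: eq_bigr => ? _; by rewrite muln1.
Qed.

Lemma incid_col n (e : 'I_(nedges n)) : \sum_i (incid i e : nat) = 2.
Proof.
rewrite /incid; have hp := valP (kedge e); move: (val (kedge e)) hp => p hp.
rewrite (eq_bigr (fun i => ((i == p.1) + (i == p.2))%N)); last by move=> i _; rewrite incN.
rewrite big_split /=.
rewrite (eq_bigr (fun i => (i == p.1) * 1)%N); last by move=> *; rewrite muln1.
rewrite sumI'.
rewrite (eq_bigr (fun i => (i == p.2) * 1)%N); last by move=> *; rewrite muln1.
by rewrite sumI'.
Qed.

Lemma incid_RR n (i j : 'I_n) :
  \sum_e (incid i e * incid j e)%N = if i == j then n.-1 else 1%N.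
Proof.
rewrite /incid (sum_edges (fun p => ((i == p.1) || (i == p.2)) * ((j == p.1) || (j == p.2)))%N).
rewrite (eq_bigr (fun p => ((i == p.1) * ((j == p.1) + (j == p.2))
   + (i == p.2) * ((j == p.1) + (j == p.2)))%N)); last first.
  by move=> p hp; rewrite !incN // mulnDl.
rewrite (pairs (fun a b => ((i == a) * ((j == a) + (j == b))
   + (i == b) * ((j == a) + (j == b)))%N)).
transitivity (\sum_(a < n) \sum_(b < n) (a < b) * ((i == a) * ((j == a) + (j == b)))
   + \sum_(a < n) \sum_(b < n) (a < b) * ((i == b) * ((j == a) + (j == b))))%N.
  rewrite -big_split; apply: eq_bigr => a _; rewrite -big_split; apply: eq_bigr => b _ /=.
  by rewrite mulnDr.
rewrite dbl1 dbl2.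
case: (i =P j) => [<-|hij].
  rewrite -(count_lg i); congr (_ + _)%N; apply: eq_bigr => b _.
    rewrite eqxx -(inj_eq val_inj) /=.
    by case: (ltngtP i b) => h //=; rewrite ?muln0 ?muln1 ?addn0.
  rewrite eqxx -(inj_eq val_inj) /=.
  by case: (ltngtP b i) => h //=; rewrite ?muln0 ?muln1 ?addn0.
have hji : (j == i) = false by apply/eqP => h; apply: hij.
rewrite (eq_bigr (fun b => (b == j) * (i < b))%N); last by move=> b _; rewrite hji add0n mulnC eq_sym.
rewrite sumI'.
rewrite (eq_bigr (fun a => (a == j) * (a < i))%N); last by move=> a _; rewrite hji addn0 mulnC eq_sym.
rewrite sumI'.
case: (ltngtP i j) => h //=.
by exfalso; apply: hij; apply: val_inj.
Qed.

Lemma incid_S n (e f : 'I_(nedges n)) :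
  \sum_i (incid i e * incid i f)%N =
  let p := val (kedge e) in let q := val (kedge f) in
  ((p.1 == q.1) + (p.1 == q.2) + (p.2 == q.1) + (p.2 == q.2))%N.
Proof.
rewrite /incid /=.
move: (kedge e) (kedge f) => [p hp] [q hq] /=.
rewrite (eq_bigr (fun i => ((i == p.1) * ((i == q.1) + (i == q.2))
   + (i == p.2) * ((i == q.1) + (i == q.2)))%N)); last first.
  by move=> i _; rewrite !incN // mulnDl.
by rewrite big_split /= !sumI' addnA.
Qed.

Lemma key n (a b c d : 'I_n) : (a < b)%N -> (c < d)%N -> (a, b) != (c, d) ->
  ((a == c) + (a == d) + (b == c) + (b == d))%N = [|| a == c, a == d, b == c | b == d] :> nat.
Proof.
rewrite xpair_eqE -!(inj_eq val_inj) /=.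
move: (val a) (val b) (val c) (val d) => {}a {}b {}c {}d.
case: (a =P c) => h1; case: (a =P d) => h2; case: (b =P c) => h3; case: (b =P d) => h4 /=; lia.
Qed.

Lemma ex_share n (a b c d : 'I_n) :
  [exists i, ((i == a) || (i == b)) && ((i == c) || (i == d))] = [|| a == c, a == d, b == c | b == d].
Proof.
apply/existsP/idP => [[i /andP[h1 h2]] | ].
  by case/orP: h1 => /eqP h1; case/orP: h2 => /eqP h2; subst; rewrite ?eqxx ?orbT.
by case/or4P => /eqP->; [exists c | exists d | exists c | exists d];
  rewrite !eqxx ?orbT.
Qed.

Section Mx.
Local Open Scope ring_scope.
Variable R : comNzRingType.

Lemma incRR n : (0 < n)%N ->
  incmx R n *m (incmx R n)^T = (n%:R - 2)%:M + const_mx 1.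
Proof.
move=> hn; apply/matrixP=> i j; rewrite !mxE.
under eq_bigr do rewrite !mxE -natrM.
rewrite -natr_sum incid_RR.
case: (i =P j) => _ /=; last by rewrite mulr0n add0r.
rewrite mulr1n; case: n hn i j => // n _ i j /=.
by rewrite -[n.+1]addn1 natrD; ring.
Qed.

Lemma incRJ n k : incmx R n *m (const_mx 1 : 'M_(nedges n, k)) = (n%:R - 1) *: const_mx 1.
Proof.
apply/matrixP=> i j; rewrite !mxE.
under eq_bigr do rewrite !mxE mulr1.
rewrite -natr_sum incid_sum mulr1.
case: n i => [[]//|n i] /=.
by rewrite -[n.+1]addn1 natrD addrK.
Qed.

Lemma incRtJ n k : (incmx R n)^T *m (const_mx 1 : 'M_(n, k)) = 2 *: const_mx 1.
Proof.
apply/matrixP=> i j; rewrite !mxE.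
under eq_bigr do rewrite !mxE mulr1.
by rewrite -natr_sum incid_col mulr1.
Qed.

Lemma ALS n : lineadj R n = (incmx R n)^T *m incmx R n - 2%:M.
Proof.
apply/matrixP => e f; rewrite !mxE.
under eq_bigr do rewrite !mxE -natrM.
rewrite -natr_sum incid_S /=.
have hp := valP (kedge e); have hq := valP (kedge f).
case: (e =P f) => [<-|hef].
  rewrite eqxx /= mulr1n.
  have -> : ((val (kedge e)).1 == (val (kedge e)).2) = false.
    by rewrite -(inj_eq val_inj) /= ltn_eqF.
  by rewrite eq_sym -(inj_eq val_inj) /= ltn_eqF // !eqxx /= subrr.
have /eqP hef' := hef; rewrite /= mulr0n subr0.
rewrite /incid ex_share -key //.
rewrite -!surjective_pairing; apply/eqP => h; apply: hef.
by apply: enum_val_inj; apply: val_inj.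
Qed.

End Mx.

Local Open Scope ring_scope.

Section Alg.
Variable F : fieldType.

Lemma JJ a b c : (const_mx 1 : 'M[F]_(a,b)) *m (const_mx 1 : 'M[F]_(b,c)) = b%:R *: const_mx 1.
Proof.
apply/matrixP=> i j; rewrite !mxE.
under eq_bigr do rewrite !mxE mulr1.
by rewrite sumr_const card_ord mulr1.
Qed.

Variables n m : nat.
Variable Rm : 'M[F]_(n, m).
Hypothesis hRR : Rm *m Rm^T = (n%:R - 2)%:M + const_mx 1.
Hypothesis hRJ : forall k, Rm *m (const_mx 1 : 'M_(m,k)) = (n%:R - 1) *: const_mx 1.
Hypothesis hRtJ : forall k, Rm^T *m (const_mx 1 : 'M_(n,k)) = 2 *: const_mx 1.

Lemma JRt k : (const_mx 1 : 'M_(k,m)) *m Rm^T = (n%:R - 1) *: const_mx 1.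
Proof. by apply: trmx_inj; rewrite trmx_mul trmxK trmx_const hRJ linearZ /= trmx_const. Qed.
Lemma JR k : (const_mx 1 : 'M_(k,n)) *m Rm = 2 *: const_mx 1.
Proof.
by apply: trmx_inj; rewrite trmx_mul trmx_const hRtJ linearZ /= trmx_const.
Qed.
Lemma RS : Rm *m (Rm^T *m Rm) = (n%:R - 2) *: Rm + 2 *: const_mx 1.
Proof. by rewrite mulmxA hRR mulmxDl mul_scalar_mx JR. Qed.
Lemma SRt : (Rm^T *m Rm) *m Rm^T = (n%:R - 2) *: Rm^T + 2 *: const_mx 1.
Proof. by rewrite -mulmxA hRR mulmxDr mul_mx_scalar hRtJ. Qed.
Lemma SS : (Rm^T *m Rm) *m (Rm^T *m Rm) = (n%:R - 2) *: (Rm^T *m Rm) + 4 *: const_mx 1.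
Proof.
rewrite -mulmxA RS mulmxDr -!scalemxAr hRtJ scalerA; congr (_ + _ *: _).
ring.
Qed.
Lemma SJ k : (Rm^T *m Rm) *m (const_mx 1 : 'M_(m,k)) = (2 * (n%:R - 1)) *: const_mx 1.
Proof. by rewrite -mulmxA hRJ -scalemxAr hRtJ scalerA mulrC. Qed.
Lemma JS k : (const_mx 1 : 'M_(k,m)) *m (Rm^T *m Rm) = (2 * (n%:R - 1)) *: const_mx 1.
Proof. by rewrite mulmxA JRt -scalemxAl JR scalerA mulrC. Qed.

Lemma hm : 2 * m%:R = n%:R * (n%:R - 1) :> F.
Proof.
have := congr1 (fun A : 'M[F]_(1,m) => A *m (const_mx 1 : 'M[F]_(m,1))) (JR 1).
rewrite -mulmxA hRJ -scalemxAr -scalemxAl !JJ !scalerA => /matrixP/(_ 0 0).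
by rewrite !mxE !mulr1 mulrC.
Qed.

Definition M (c1 c2 c3 c4 c5 c6 c7 c8 c9 : F) : 'M[F]_(n+m) :=
 block_mx (c1%:M + c2 *: const_mx 1) (c3 *: Rm + c4 *: const_mx 1)
          (c5 *: Rm^T + c6 *: const_mx 1)
          (c7%:M + c8 *: (Rm^T *m Rm) + c9 *: const_mx 1).

Let N := (n%:R : F).
Let mr := (m%:R : F).

Lemma mulM c1 c2 c3 c4 c5 c6 c7 c8 c9 d1 d2 d3 d4 d5 d6 d7 d8 d9 :
  M c1 c2 c3 c4 c5 c6 c7 c8 c9 *m M d1 d2 d3 d4 d5 d6 d7 d8 d9 =
  M (c1*d1 + (N-2)*c3*d5)
    (c1*d2 + c2*d1 + N*c2*d2 + c3*d5 + (N-1)*(c3*d6 + c4*d5) + mr*c4*d6)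
    (c1*d3 + c3*d7 + (N-2)*c3*d8)
    (c1*d4 + 2*c2*d3 + N*c2*d4 + 2*c3*d8 + (N-1)*c3*d9 + c4*d7 + 2*(N-1)*c4*d8 + mr*c4*d9)
    (c5*d1 + c7*d5 + (N-2)*c8*d5)
    (2*c5*d2 + c6*d1 + N*c6*d2 + c7*d6 + 2*c8*d5 + 2*(N-1)*c8*d6 + (N-1)*c9*d5 + mr*c9*d6)
    (c7*d7)
    (c5*d3 + c7*d8 + c8*d7 + (N-2)*c8*d8)
    (2*c5*d4 + 2*c6*d3 + N*c6*d4 + c7*d9 + 4*c8*d8 + 2*(N-1)*(c8*d9 + c9*d8) + c9*d7 + mr*c9*d9).
Proof.
rewrite /M mulmx_block.
rewrite !mulmxDl !mulmxDr -!scalemxAl -!scalemxAr !mul_scalar_mx !mul_mx_scalar.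
rewrite hRR !hRJ !hRtJ !JRt !JR !RS !SRt !SS !SJ !JS !JJ.
move: (Rm^T *m Rm) => S.
congr block_mx; apply/matrixP=> i j; rewrite !mxE /N /mr; ring.
Qed.


Lemma Mcongr c1 c2 c3 c4 c5 c6 c7 c8 c9 d1 d2 d3 d4 d5 d6 d7 d8 d9 :
  c1 = d1 -> c2 = d2 -> c3 = d3 -> c4 = d4 -> c5 = d5 -> c6 = d6 -> c7 = d7 -> c8 = d8 -> c9 = d9 ->
  M c1 c2 c3 c4 c5 c6 c7 c8 c9 = M d1 d2 d3 d4 d5 d6 d7 d8 d9.
Proof. by move=> -> -> -> -> -> -> -> -> ->. Qed.

Lemma addM c1 c2 c3 c4 c5 c6 c7 c8 c9 d1 d2 d3 d4 d5 d6 d7 d8 d9 :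
  M c1 c2 c3 c4 c5 c6 c7 c8 c9 + M d1 d2 d3 d4 d5 d6 d7 d8 d9 =
  M (c1+d1) (c2+d2) (c3+d3) (c4+d4) (c5+d5) (c6+d6) (c7+d7) (c8+d8) (c9+d9).
Proof.
rewrite /M add_block_mx; move: (Rm^T *m Rm) => S.
congr block_mx; apply/matrixP=> i j; rewrite !mxE; ring.
Qed.

Lemma scaleM a c1 c2 c3 c4 c5 c6 c7 c8 c9 :
  a *: M c1 c2 c3 c4 c5 c6 c7 c8 c9 =
  M (a*c1) (a*c2) (a*c3) (a*c4) (a*c5) (a*c6) (a*c7) (a*c8) (a*c9).
Proof.
rewrite /M scale_block_mx; move: (Rm^T *m Rm) => S.
congr block_mx; apply/matrixP=> i j; rewrite !mxE; ring.
Qed.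

Lemma trM c1 c2 c3 c4 c5 c6 c7 c8 c9 :
  (M c1 c2 c3 c4 c5 c6 c7 c8 c9)^T = M c1 c2 c5 c6 c3 c4 c7 c8 c9.
Proof.
rewrite /M tr_block_mx !linearD /= !linearZ /= trmx_mul trmxK !trmx_const !tr_scalar_mx.
by [].
Qed.

Lemma oneM : 1%:M = M 1 0 0 0 0 0 1 0 0.
Proof.
rewrite /M (scalar_mx_block n m); move: (Rm^T *m Rm) => S.
congr block_mx; apply/matrixP=> i j; rewrite !mxE; ring.
Qed.

Lemma trJ k : \tr (const_mx 1 : 'M[F]_k) = k%:R.
Proof.
rewrite /mxtrace; under eq_bigr do rewrite mxE.
by rewrite sumr_const card_ord.
Qed.

Lemma traceM c1 c2 c3 c4 c5 c6 c7 c8 c9 :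
  \tr (M c1 c2 c3 c4 c5 c6 c7 c8 c9) = N*(c1 + c2) + mr*(c7+c9) + c8*N*(N-1).
Proof.
rewrite /M mxtrace_block !mxtraceD !mxtraceZ !mxtrace_scalar !trJ mxtrace_mulC hRR.
rewrite mxtraceD mxtrace_scalar trJ /N /mr; ring.
Qed.

End Alg.

Lemma eigproj (F : fieldType) k (L P Q1 Q2 Q3 Q4 : 'M[F]_k) a b1 b2 b3 b4 :
 L^T = L -> P^T = P -> P *m P = P -> \tr P != 0 -> P *m L = a *: P ->
 Q1^T = Q1 -> Q1 *m L = b1 *: Q1 -> b1 != a ->
 Q2^T = Q2 -> Q2 *m L = b2 *: Q2 -> b2 != a ->
 Q3^T = Q3 -> Q3 *m L = b3 *: Q3 -> b3 != a ->
 Q4^T = Q4 -> Q4 *m L = b4 *: Q4 -> b4 != a ->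
 P + Q1 + Q2 + Q3 + Q4 = 1%:M -> eigenprojector L a P.
Proof.
move=> hL hPt hPP htr hPL hQ1 hQ1L hb1 hQ2 hQ2L hb2 hQ3 hQ3L hb3 hQ4 hQ4L hb4 hsum.
have hPE : (P <= eigenspace L a)%MS by apply/eigenspaceP.
set E := eigenspace L a.
have hE : E *m L = a *: E by apply/eigenspaceP.
have EQ0 : forall Q b, Q^T = Q -> Q *m L = b *: Q -> b != a -> E *m Q = 0.
  move=> Q b hQ hQL hb.
  have LQ : L *m Q = b *: Q.
    by apply: trmx_inj; rewrite trmx_mul hQ hL hQL linearZ /= hQ.
  have : (a - b) *: (E *m Q) = 0.
    by rewrite scalerBl scalemxAl -hE -mulmxA LQ -scalemxAr subrr.
  move/eqP; rewrite scaler_eq0 subr_eq0 eq_sym (negbTE hb) /=.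
  by move/eqP.
have hEP : E = E *m P.
  by rewrite -{1}(mulmx1 E) -hsum !mulmxDr (EQ0 _ _ hQ1 hQ1L hb1) (EQ0 _ _ hQ2 hQ2L hb2)
    (EQ0 _ _ hQ3 hQ3L hb3) (EQ0 _ _ hQ4 hQ4L hb4) !addr0.
have hP0 : P != 0 by apply: contraNneq htr => ->; rewrite mxtrace0.
split.
- rewrite /eigenvalue -/E; apply: contraNneq hP0 => hE0.
  have hE0' : eigenspace L a = 0 := hE0.
  by move: hPE; rewrite hE0' submx0.
- exact: hPt.
- exact: hPP.
- apply/andP; split; first exact: hPE.
  have hEP' : eigenspace L a = eigenspace L a *m P := hEP.
  by rewrite hEP' submxMl.
Qed.

Section Conc.
Variable R : fieldType.
Variable n : nat.
Hypothesis hn : (0 < n)%N.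
Let Rm := incmx R n.
Let hRR := incRR R hn.
Let hRJ := incRJ R n.
Let hRtJ := incRtJ R n.

Lemma constE k1 k2 k : (const_mx 1 : 'M[R]_(k1 + k2, k)) = col_mx (const_mx 1) (const_mx 1).
Proof.
apply/matrixP=> i j; rewrite -[i]splitK; case: (split i) => l /=; by rewrite ?col_mxEu ?col_mxEd !mxE.
Qed.

Lemma eL_lem : QKlap R n = M Rm (n%:R - 1) 0 (-1) 0 (-1) 0 (2 * n%:R) (-1) 0.
Proof.
rewrite /QKlap /laplacian.
have hrow : forall k (A : 'M[R]_k), \row_i (\sum_j A i j) = (A *m const_mx 1 : 'M_(k,1))^T.
  move=> k A; apply/matrixP=> i j; rewrite !mxE; apply: eq_bigr => l _; by rewrite !mxE mulr1.
rewrite hrow constE /QKadj mul_block_col mul0mx add0r ALS mulmxBl -mulmxA.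
rewrite -/Rm hRJ -scalemxAr hRtJ mul_scalar_mx tr_col_mx diag_mx_row.
rewrite /M opp_block_mx add_block_mx.
move: (Rm^T *m Rm) => S.
congr block_mx; apply/matrixP=> i j; rewrite !mxE ?oppr0 ?addr0; ring.
Qed.

Lemma eF2n_lem a b :
  block_mx 0 0 0 (1%:M - (a^-1 *: (lineadj R n + 2%:M) + b *: const_mx 1))
  = M Rm 0 0 0 0 0 0 1 (- a^-1) (- b).
Proof.
rewrite ALS /M -/Rm.
move: (Rm^T *m Rm) => S.
congr block_mx; apply/matrixP=> i j; rewrite !mxE; ring.
Qed.

Lemma eF0_lem k a b c :
  k *: block_mx (a *: const_mx 1) (b *: const_mx 1) (b *: const_mx 1) (c *: const_mx 1)
  = M Rm 0 (k * a) 0 (k * b) 0 (k * b) 0 0 (k * c).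
Proof.
rewrite /M scale_block_mx.
move: (Rm^T *m Rm) => S.
congr block_mx; apply/matrixP=> i j; rewrite !mxE; ring.
Qed.

Lemma eFn_lem k c d :
  let Fn : 'M[R]_n := 1%:M - (n%:R)^-1 *: const_mx 1 in
  k *: block_mx Fn (c *: (Fn *m Rm)) (c *: (Fn *m Rm)^T) (d *: (Rm^T *m Fn *m Rm))
  = M Rm k (- k / n%:R) (k * c) (- 2 * k * c / n%:R) (k * c) (- 2 * k * c / n%:R)
        0 (k * d) (- 4 * k * d / n%:R).
Proof.
move=> Fn.
have h1 : Fn *m Rm = Rm - (2 / n%:R) *: const_mx 1.
  by rewrite /Fn mulmxBl mul1mx -scalemxAl (JR hRtJ) scalerA mulrC.
have h2 : Rm^T *m Fn *m Rm = Rm^T *m Rm - (4 / n%:R) *: const_mx 1.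
  rewrite -mulmxA h1 mulmxBr -scalemxAr hRtJ scalerA.
  congr (_ - _ *: _); ring.
rewrite h1 h2 /M scale_block_mx /Fn.
rewrite !linearD /= !linearN /= !linearZ /= trmx_const.
move: (Rm^T *m Rm) => S.
congr block_mx; apply/matrixP=> i j; rewrite !mxE; ring.
Qed.

End Conc.

Ltac nz s4 s2 := repeat (apply/andP; split); try done; clear - s4 s2;
  first [ by apply: lt0r_neq0; lra | by apply: ltr0_neq0; lra
        | by apply: lt0r_neq0; nra | by apply: ltr0_neq0; nra ].

Ltac dz enp enm ezp hN ezm s4 s2 := apply/eqP; rewrite ?enp ?enm ?ezp ?hN ?ezm;
  clear - s4 s2; move=> ?; nra.

Ltac sc k0 kf cf df hmr enp enm ezp hN hN' ezm s4 s2 := unfold k0, kf, cf, df; cbv beta;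
  rewrite ?hmr ?enp ?enm ?ezp ?hN ?hN' ?ezm; field; nz s4 s2.

Theorem lemma3p6 (R : rcfType) (n : nat) (hn : (4 <= n)%N) :
  let m := nedges n in
  let Rm : 'M[R]_(n, m) := incmx R n in
  let AL : 'M[R]_m := lineadj R n in
  let L : 'M[R]_(n + m) := QKlap R n in
  let nr : R := n%:R in
  let zp : R := nr + 1 in
  let zm : R := 0 in
  let np : R := (2 * nr + 1 + Num.sqrt (4 * nr + 1)) / 2 in
  let nm : R := (2 * nr + 1 - Num.sqrt (4 * nr + 1)) / 2 in
  let Fn : 'M[R]_n := 1%:M - nr^-1 *: const_mx 1 in
  let F2n : 'M[R]_(n + m) :=
    block_mx 0 0 0
      (1%:M - ((nr - 2)^-1 *: (AL + 2%:M)
               + (2 / (nr * (nr - 1)) - 4 / (nr * (nr - 2))) *: const_mx 1)) in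
  let F0 (z : R) : 'M[R]_(n + m) :=
    ((2 - z) ^+ 2 / ((2 - z) ^+ 2 + 2 * nr - 2)) *:
      block_mx (nr^-1 *: const_mx 1) ((2 / (nr * (2 - z))) *: const_mx 1)
               ((2 / (nr * (2 - z))) *: const_mx 1)
               ((4 / (nr * (2 - z) ^+ 2)) *: const_mx 1) in
  let Fnpm (z : R) : 'M[R]_(n + m) :=
    ((nr + 2 - z) ^+ 2 / ((nr + 2 - z) ^+ 2 + nr - 2)) *:
      block_mx Fn ((nr + 2 - z)^-1 *: (Fn *m Rm))
               ((nr + 2 - z)^-1 *: (Fn *m Rm)^T)
               (((nr + 2 - z) ^+ 2)^-1 *: (Rm^T *m Fn *m Rm)) in
  [/\ eigenprojector L (2 * nr) F2n,
      eigenprojector L zp (F0 zp) /\ eigenprojector L zm (F0 zm),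
      eigenprojector L np (Fnpm np) /\ eigenprojector L nm (Fnpm nm) &
      L = zp *: F0 zp + zm *: F0 zm + np *: Fnpm np + nm *: Fnpm nm
          + (2 * nr) *: F2n].
Proof.
move=> m Rm AL L nr zp zm np nm Fn F2n F0 Fnpm.
have hn0 : (0 < n)%N by apply: leq_trans hn.
have hRR := incRR R hn0.
have hRJ := incRJ R n.
have hRtJ := incRtJ R n.
pose s := Num.sqrt (4 * nr + 1).
have hn4 : (4 : R) <= nr by rewrite /nr ler_nat.
have hs : s ^+ 2 = 4 * nr + 1 by rewrite /s sqr_sqrtr //; lra.
have s0 : 0 <= s by rewrite /s sqrtr_ge0.
have s4 : 4 < s by nra.
have hN : nr = (s ^+ 2 - 1) / 4 by rewrite hs; field.
have hN' : (n%:R : R) = (s ^+ 2 - 1) / 4 := hN.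
have hm2 := hm hRJ hRtJ.
have hmr : ((nedges n)%:R : R) = (s^+2 - 1) / 4 * ((s^+2 - 1) / 4 - 1) / 2.
  by rewrite -hN' -hm2; field.
have enp : np = (s + 1) ^+ 2 / 4 by rewrite /np -/s hN; field.
have enm : nm = (s - 1) ^+ 2 / 4 by rewrite /nm -/s hN; field.
have ezp : zp = (s ^+ 2 + 3) / 4 by rewrite /zp hN; field.
have ezm : zm = 0 by [].
clearbody zm.
have eL : L = M (incmx R n) (n%:R - 1) 0 (-1) 0 (-1) 0 (2 * n%:R) (-1) 0 := eL_lem R n.
have eF2n : F2n = M (incmx R n) 0 0 0 0 0 0 1 (- (nr - 2)^-1)
   (- (2 / (nr * (nr - 1)) - 4 / (nr * (nr - 2)))) := eF2n_lem _ _ _.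
pose k0 := fun z : R => (2 - z) ^+ 2 / ((2 - z) ^+ 2 + 2 * nr - 2).
pose kf := fun z : R => (nr + 2 - z) ^+ 2 / ((nr + 2 - z) ^+ 2 + nr - 2).
pose cf := fun z : R => (nr + 2 - z)^-1.
pose df := fun z : R => ((nr + 2 - z) ^+ 2)^-1.
have eF0 : forall z, F0 z = M (incmx R n) 0 (k0 z * nr^-1) 0
   (k0 z * (2 / (nr * (2 - z)))) 0 (k0 z * (2 / (nr * (2 - z)))) 0 0
   (k0 z * (4 / (nr * (2 - z) ^+ 2)))
   := fun z => eF0_lem _ _ _ _ _.
have eFn : forall z, Fnpm z = 
   M (incmx R n) (kf z) (- kf z / n%:R) (kf z * cf z) (- 2 * kf z * cf z / n%:R)
     (kf z * cf z) (- 2 * kf z * cf z / n%:R) 0 (kf z * df z) (- 4 * kf z * df z / n%:R)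
   := fun z => eFn_lem _ _ _ _.
have s2 : 16 < s ^+ 2 by nra.
clearbody s.
have Ls : L^T = L by rewrite eL trM.
have F2s : F2n^T = F2n by rewrite eF2n trM.
have F2i : F2n *m F2n = F2n.
  by rewrite eF2n (mulM hRR hRJ hRtJ); apply: Mcongr; sc k0 kf cf df hmr enp enm ezp hN hN' ezm s4 s2.
have F2e : F2n *m L = (2 * nr) *: F2n.
  by rewrite eF2n eL (mulM hRR hRJ hRtJ) scaleM; apply: Mcongr; sc k0 kf cf df hmr enp enm ezp hN hN' ezm s4 s2.
have F2t : \tr F2n != 0.
  rewrite eF2n (traceM hRR); set t := (X in X != 0).
  have -> : t = (s ^+ 2 - 1) * (s ^+ 2 - 13) / 32 by rewrite /t; sc k0 kf cf df hmr enp enm ezp hN hN' ezm s4 s2.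
  by apply: lt0r_neq0; apply: divr_gt0; [apply: mulr_gt0|]; lra.
have Pps : (F0 zp)^T = F0 zp by rewrite eF0 trM.
have Ppi : F0 zp *m F0 zp = F0 zp.
  by rewrite eF0 (mulM hRR hRJ hRtJ); apply: Mcongr; sc k0 kf cf df hmr enp enm ezp hN hN' ezm s4 s2.
have Ppe : F0 zp *m L = zp *: F0 zp.
  by rewrite eF0 eL (mulM hRR hRJ hRtJ) scaleM; apply: Mcongr; sc k0 kf cf df hmr enp enm ezp hN hN' ezm s4 s2.
have Ppt : \tr (F0 zp) != 0.
  rewrite eF0 (traceM hRR); set t := (X in X != 0).
  have -> : t = 1 by rewrite /t; sc k0 kf cf df hmr enp enm ezp hN hN' ezm s4 s2.
  exact: oner_neq0.
have Pms : (F0 zm)^T = F0 zm by rewrite eF0 trM.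
have Pmi : F0 zm *m F0 zm = F0 zm.
  by rewrite eF0 (mulM hRR hRJ hRtJ); apply: Mcongr; sc k0 kf cf df hmr enp enm ezp hN hN' ezm s4 s2.
have Pme : F0 zm *m L = zm *: F0 zm.
  by rewrite eF0 eL (mulM hRR hRJ hRtJ) scaleM; apply: Mcongr; sc k0 kf cf df hmr enp enm ezp hN hN' ezm s4 s2.
have Pmt : \tr (F0 zm) != 0.
  rewrite eF0 (traceM hRR); set t := (X in X != 0).
  have -> : t = 1 by rewrite /t; sc k0 kf cf df hmr enp enm ezp hN hN' ezm s4 s2.
  exact: oner_neq0.
have Nps : (Fnpm np)^T = Fnpm np by rewrite eFn trM.
have Npi : Fnpm np *m Fnpm np = Fnpm np.
  by rewrite eFn (mulM hRR hRJ hRtJ); apply: Mcongr; sc k0 kf cf df hmr enp enm ezp hN hN' ezm s4 s2.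
have Npe : Fnpm np *m L = np *: Fnpm np.
  by rewrite eFn eL (mulM hRR hRJ hRtJ) scaleM; apply: Mcongr; sc k0 kf cf df hmr enp enm ezp hN hN' ezm s4 s2.
have Npt : \tr (Fnpm np) != 0.
  rewrite eFn (traceM hRR); set t := (X in X != 0).
  have -> : t = (s ^+ 2 - 5) / 4 by rewrite /t; sc k0 kf cf df hmr enp enm ezp hN hN' ezm s4 s2.
  by apply: lt0r_neq0; apply: divr_gt0; lra.
have Nms : (Fnpm nm)^T = Fnpm nm by rewrite eFn trM.
have Nmi : Fnpm nm *m Fnpm nm = Fnpm nm.
  by rewrite eFn (mulM hRR hRJ hRtJ); apply: Mcongr; sc k0 kf cf df hmr enp enm ezp hN hN' ezm s4 s2.
have Nme : Fnpm nm *m L = nm *: Fnpm nm.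
  by rewrite eFn eL (mulM hRR hRJ hRtJ) scaleM; apply: Mcongr; sc k0 kf cf df hmr enp enm ezp hN hN' ezm s4 s2.
have Nmt : \tr (Fnpm nm) != 0.
  rewrite eFn (traceM hRR); set t := (X in X != 0).
  have -> : t = (s ^+ 2 - 5) / 4 by rewrite /t; sc k0 kf cf df hmr enp enm ezp hN hN' ezm s4 s2.
  by apply: lt0r_neq0; apply: divr_gt0; lra.
have d_p_2 : zp != (2 * nr) by dz enp enm ezp hN ezm s4 s2.
have d_m_2 : zm != (2 * nr) by dz enp enm ezp hN ezm s4 s2.
have d_np_2 : np != (2 * nr) by dz enp enm ezp hN ezm s4 s2.
have d_nm_2 : nm != (2 * nr) by dz enp enm ezp hN ezm s4 s2.
have d_2_p : (2 * nr) != zp by dz enp enm ezp hN ezm s4 s2.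
have d_m_p : zm != zp by dz enp enm ezp hN ezm s4 s2.
have d_np_p : np != zp by dz enp enm ezp hN ezm s4 s2.
have d_nm_p : nm != zp by dz enp enm ezp hN ezm s4 s2.
have d_2_m : (2 * nr) != zm by dz enp enm ezp hN ezm s4 s2.
have d_p_m : zp != zm by dz enp enm ezp hN ezm s4 s2.
have d_np_m : np != zm by dz enp enm ezp hN ezm s4 s2.
have d_nm_m : nm != zm by dz enp enm ezp hN ezm s4 s2.
have d_2_np : (2 * nr) != np by dz enp enm ezp hN ezm s4 s2.
have d_p_np : zp != np by dz enp enm ezp hN ezm s4 s2.
have d_m_np : zm != np by dz enp enm ezp hN ezm s4 s2.
have d_nm_np : nm != np by dz enp enm ezp hN ezm s4 s2.
have d_2_nm : (2 * nr) != nm by dz enp enm ezp hN ezm s4 s2.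
have d_p_nm : zp != nm by dz enp enm ezp hN ezm s4 s2.
have d_m_nm : zm != nm by dz enp enm ezp hN ezm s4 s2.
have d_np_nm : np != nm by dz enp enm ezp hN ezm s4 s2.
have sum_2 : F2n + (F0 zp) + (F0 zm) + (Fnpm np) + (Fnpm nm) = 1%:M.
  by rewrite eF2n !eF0 !eFn !addM (oneM (incmx R n)); apply: Mcongr; sc k0 kf cf df hmr enp enm ezp hN hN' ezm s4 s2.
have sum_p : (F0 zp) + F2n + (F0 zm) + (Fnpm np) + (Fnpm nm) = 1%:M.
  by rewrite eF2n !eF0 !eFn !addM (oneM (incmx R n)); apply: Mcongr; sc k0 kf cf df hmr enp enm ezp hN hN' ezm s4 s2.
have sum_m : (F0 zm) + F2n + (F0 zp) + (Fnpm np) + (Fnpm nm) = 1%:M.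
  by rewrite eF2n !eF0 !eFn !addM (oneM (incmx R n)); apply: Mcongr; sc k0 kf cf df hmr enp enm ezp hN hN' ezm s4 s2.
have sum_np : (Fnpm np) + F2n + (F0 zp) + (F0 zm) + (Fnpm nm) = 1%:M.
  by rewrite eF2n !eF0 !eFn !addM (oneM (incmx R n)); apply: Mcongr; sc k0 kf cf df hmr enp enm ezp hN hN' ezm s4 s2.
have sum_nm : (Fnpm nm) + F2n + (F0 zp) + (F0 zm) + (Fnpm np) = 1%:M.
  by rewrite eF2n !eF0 !eFn !addM (oneM (incmx R n)); apply: Mcongr; sc k0 kf cf df hmr enp enm ezp hN hN' ezm s4 s2.
split.
- exact: (eigproj Ls F2s F2i F2t F2e Pps Ppe d_p_2 Pms Pme d_m_2 Nps Npe d_np_2 Nms Nme d_nm_2 sum_2).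
- split; [exact: (eigproj Ls Pps Ppi Ppt Ppe F2s F2e d_2_p Pms Pme d_m_p Nps Npe d_np_p Nms Nme d_nm_p sum_p) | exact: (eigproj Ls Pms Pmi Pmt Pme F2s F2e d_2_m Pps Ppe d_p_m Nps Npe d_np_m Nms Nme d_nm_m sum_m)].
- split; [exact: (eigproj Ls Nps Npi Npt Npe F2s F2e d_2_np Pps Ppe d_p_np Pms Pme d_m_np Nms Nme d_nm_np sum_np) | exact: (eigproj Ls Nms Nmi Nmt Nme F2s F2e d_2_nm Pps Ppe d_p_nm Pms Pme d_m_nm Nps Npe d_np_nm sum_nm)].
- by rewrite eL !eF0 !eFn eF2n !scaleM !addM; apply: Mcongr; sc k0 kf cf df hmr enp enm ezp hN hN' ezm s4 s2.
Qed.
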